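(* For each quantile level $\alpha$, let $q_t^{\alpha}=b_t^{\alpha}+\theta_t^{\alpha}$ be the Quantile Tracker iterate obtained via $\theta_{t+1}^{\alpha}=\theta_t^{\alpha}-\eta(\mathbb{1}\{y_t\le q_t^{\alpha}\}-\alpha)$ from any initial offset $\theta_1^{\alpha}$ and learning rate $\eta>0$, and let $[\hat q_t^{\alpha_1},\dots,\hat q_t^{\alpha_{|\mathcal{A}|}}]=m([q_t^{\alpha_1},\dots,q_t^{\alpha_{|\mathcal{A}|}}])$, where $m:\mathbb{R}^{|\mathcal{A}|}\to\mathbb{R}^{|\mathcal{A}|}$ produces a vector with nondecreasing entries. For both $m=\textsc{Sort}$ and $m=\Pi_{\mathcal{K}}$, there exist a set of levels $\mathcal{A}$ and a sequence $(y_t,b_t)$ with $|y_t-b_t^{\alpha}|<R$ for all $\alpha,t$ (for some $R>0$) such that for some $\alpha\in\mathcal{A}$, $\lim_{T\to\infty}\frac1T\sum_{t=1}^T\mathbb{1}\{y_t\le\hat q_t^{\alpha}\}\ne\alpha$.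
   Context: $\mathcal{A}=\{\alpha_1<\dots<\alpha_{|\mathcal{A}|}\}\subset(0,1)$ is a set of quantile levels; base forecasts $b_t\in\mathcal{K}$ where $\mathcal{K}=\{x\in\mathbb{R}^{|\mathcal{A}|}:x_1\le\dots\le x_{|\mathcal{A}|}\}$. $\textsc{Sort}(v)$ is the vector whose $i$-th entry is the $i$-th smallest entry of $v$; $\Pi_{\mathcal{K}}$ is Euclidean projection onto $\mathcal{K}$ (isotonic regression). *)

(* Defs.v *)
From HB Require Import structures.
From mathcomp Require Import all_boot all_order all_algebra.
From mathcomp Require Import all_classical all_reals all_analysis.
Set Implicit Arguments. Unset Strict Implicit. Unset Printing Implicit Defensive.
Import Order.TTheory GRing.Theory Num.Theory.
Import numFieldNormedType.Exports.
Local Open Scope classical_set_scope.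
Local Open Scope ring_scope.

Section QT.
Variable R : realType.

Definition levels (n : nat) (a : 'I_n -> R) : Prop :=
  (forall i, 0 < a i < 1) /\ (forall i j : 'I_n, (i < j)%N -> a i < a j).

Definition inK (n : nat) (v : 'I_n -> R) : Prop :=
  forall i j : 'I_n, (i <= j)%N -> v i <= v j.

Definition sortv (n : nat) (v : 'I_n -> R) : 'I_n -> R :=
  fun i => nth 0 (sort (fun x y : R => x <= y) [seq v j | j <- enum 'I_n]) i.

Definition is_isoproj (n : nat) (v p : 'I_n -> R) : Prop :=
  inK p /\ forall x, inK x ->
    \sum_(i < n) (v i - p i) ^+ 2 <= \sum_(i < n) (v i - x i) ^+ 2.

(* Quantile Tracker offsets; index t corresponds to time t+1 *)
Fixpoint qt_theta (n : nat) (a : 'I_n -> R) (eta : R)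
    (y : nat -> R) (b : nat -> 'I_n -> R) (th1 : 'I_n -> R) (t : nat)
    : 'I_n -> R :=
  match t with
  | 0 => th1
  | t'.+1 => fun i =>
      let th := qt_theta a eta y b th1 t' in
      th i - eta * ((nat_of_bool (y t' <= b t' i + th i))%:R - a i)
  end.

Definition qt_q n (a : 'I_n -> R) (eta : R) (y : nat -> R)
    (b : nat -> 'I_n -> R) (th1 : 'I_n -> R) (t : nat) : 'I_n -> R :=
  fun i => b t i + qt_theta a eta y b th1 t i.

Definition coverage n (a : 'I_n -> R) (m : ('I_n -> R) -> ('I_n -> R))
    (eta : R) (y : nat -> R) (b : nat -> 'I_n -> R) (th1 : 'I_n -> R)
    (i : 'I_n) : nat -> R :=
  fun N => (N.+1%:R)^-1 *
    \sum_(t < N.+1) (nat_of_bool (y t <= m (qt_q a eta y b th1 t) i))%:R.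

Definition fails_for n (a : 'I_n -> R) (m : ('I_n -> R) -> ('I_n -> R))
    (eta : R) (th1 : 'I_n -> R) : Prop :=
  exists (y : nat -> R) (b : nat -> 'I_n -> R),
    (forall t, inK (b t)) /\
    (exists Rb : R, 0 < Rb /\ forall t i, `|y t - b t i| < Rb) /\
    exists i : 'I_n, ~ (coverage a m eta y b th1 i @ \oo --> a i).

End QT.

(* Main.v *)
Require Import Defs.
From HB Require Import structures.
From mathcomp Require Import all_boot all_order all_algebra.
From mathcomp Require Import all_classical all_reals all_analysis.
From mathcomp Require Import ring lra.
Import Order.TTheory GRing.Theory Num.Theory.
Import numFieldNormedType.Exports.
Local Open Scope ring_scope.

Section Cex.
Variable R : realType.
Variable eta : R.
Variable th1 : 'I_2 -> R.

Definition i0 : 'I_2 := ord0.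
Definition i1 : 'I_2 := ord_max.

Lemma I2_cases (i : 'I_2) : i = i0 \/ i = i1.
Proof. case: i => [[|[|k]] Hi]; [left|right|]; try by apply/val_inj. by []. Qed.

Definition aa : 'I_2 -> R := fun i => (i.+1)%:R / 3.

Definition hit (th : 'I_2 -> R) (i : 'I_2) : bool :=
  if th i1 < th i0 then i == i0 else i == i1.

Fixpoint st (t : nat) : 'I_2 -> R :=
  match t with
  | 0 => th1
  | t'.+1 => fun i => st t' i - eta * ((nat_of_bool (hit (st t') i))%:R - aa i)
  end.

Definition ypol (th : 'I_2 -> R) : R :=
  if th i1 < th i0 then (th i0 + th i1) / 2 else th i1 + 1.
Definition bpol (th : 'I_2 -> R) (i : 'I_2) : R :=
  if th i1 < th i0 then 0 else (if i == i1 then 1 else 0).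

Definition yy t := ypol (st t).
Definition bb t := bpol (st t).

Lemma hitE t i : (yy t <= bb t i + st t i) = hit (st t) i.
Proof.
rewrite /yy /bb /ypol /bpol /hit; set th := st t.
case: (boolP (th i1 < th i0)) => h; rewrite ?(negbTE h) ?h; [|move: h; rewrite -leNgt => h]; case: (I2_cases i) => ->; rewrite ?eqxx //=.
- apply/idP; lra.
- apply/negbTE; rewrite -ltNge; lra.
- apply/negbTE; rewrite -ltNge; lra.
- apply/idP; lra.
Qed.

Lemma thetaE t : qt_theta aa eta yy bb th1 t = st t.
Proof.
elim: t => [//|t IH]; apply/funext => i; rewrite /= IH -hitE //.
Qed.


Lemma st_step t i : st t.+1 i = st t i - eta * ((nat_of_bool (hit (st t) i))%:R - aa i).
Proof. by []. Qed.

Lemma step_gt t : st t i1 < st t i0 ->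
  st t.+1 i0 = st t i0 - eta * (2 / 3) /\ st t.+1 i1 = st t i1 + eta * (2 / 3).
Proof.
move=> h; rewrite !st_step /hit h /aa /= ?mulr1n ?mulr0n; split; lra.
Qed.

Lemma step_le t : st t i0 <= st t i1 ->
  st t.+1 i0 = st t i0 + eta / 3 /\ st t.+1 i1 = st t i1 - eta / 3.
Proof.
move=> h; rewrite !st_step /hit ltNge h /aa /= ?mulr1n ?mulr0n; split; lra.
Qed.

Lemma stS t : st t i0 + st t i1 = th1 i0 + th1 i1.
Proof.
elim: t => [//|t IH].
case: (boolP (st t i1 < st t i0)) => h.
  by case: (step_gt t h) => -> ->; rewrite -IH; lra.
by move: h; rewrite -leNgt => h; case: (step_le t h) => -> ->; rewrite -IH; lra.
Qed.

Hypothesis eta_gt0 : 0 < eta.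

Definition Cb : R := `|th1 i0 - th1 i1| + 2 * eta.

Lemma Cb_ge : 2 * eta <= Cb.
Proof. by rewrite /Cb lerDr normr_ge0. Qed.

Lemma stD t : - Cb <= st t i0 - st t i1 <= Cb.
Proof.
have hC := Cb_ge. have he : (0:R) < eta by exact: eta_gt0.
elim: t => [|t IH]; first by rewrite -ler_norml /Cb lerDl mulr_ge0 // ltW.
case: (boolP (st t i1 < st t i0)) => h.
  case: (step_gt t h) => -> ->; move: IH h.
  move: (st t i0) (st t i1) => u v /andP [h1 h2] h; apply/andP; split; lra.
move: h; rewrite -leNgt => h; case: (step_le t h) => -> ->; move: IH h.
move: (st t i0) (st t i1) => u v /andP [h1 h2] h; apply/andP; split; lra.
Qed.

End Cex.

Lemma sortv_max (R : realType) (v : 'I_2 -> R) j : v j <= sortv v i1.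
Proof.
rewrite /sortv.
set s := sort _ _.
have Hs : sorted (fun x y : R => x <= y) s by apply: sort_sorted; exact: le_total.
have Hm : v j \in s by rewrite mem_sort map_f // mem_enum.
have Hsz : size s = 2 by rewrite size_sort size_map size_enum_ord.
move: Hs Hm Hsz; case: s => [|x [|z [|]]] //= /andP [hxz _].
rewrite !inE => /orP [/eqP ->|/eqP ->] _ //.
Qed.

Lemma inK2 (R : realType) (x : 'I_2 -> R) : x i0 <= x i1 -> inK x.
Proof.
move=> h i j; case: (I2_cases i) => ->; case: (I2_cases j) => -> //.
Qed.

Lemma sum2 (R : realType) (f : 'I_2 -> R) : \sum_(i < 2) f i = f i0 + f i1.
Proof. rewrite !big_ord_recl big_ord0 addr0; congr (_ + f _); exact/val_inj. Qed.

Lemma proj_a (R : realType) (v p : 'I_2 -> R) : is_isoproj v p -> v i0 <= v i1 -> v i1 <= p i1.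
Proof.
move=> [_ H] h; have := H v (@inK2 R v h); rewrite !sum2 !subrr expr0n /= addr0.
move=> hab.
have : (v i1 - p i1) ^+ 2 == 0.
  rewrite eq_le sqr_ge0 andbT; move: hab; move: (v i0 - p i0) (v i1 - p i1) => a b; nra.
rewrite sqrf_eq0 subr_eq0 => /eqP ->; exact: lexx.
Qed.

Lemma proj_b (R : realType) (v p : 'I_2 -> R) : is_isoproj v p -> v i1 < v i0 ->
  (v i0 + v i1) / 2 <= p i1.
Proof.
move=> [Kp H] h; have := H (fun _ => (v i0 + v i1) / 2) (@inK2 R (fun _ => (v i0 + v i1) / 2) (lexx ((v i0 + v i1) / 2))); rewrite !sum2.
have hp := Kp i0 i1 isT.
move: (v i0) (v i1) (p i0) (p i1) h hp => a b c d h hp hs.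
rewrite leNgt; apply/negP => hd.
nra.
Qed.

Lemma cov_fail (R : realType) (eta : R) (th1 : 'I_2 -> R) m :
  (forall t, yy R eta th1 t <= m (qt_q (@aa R) eta (yy R eta th1) (bb R eta th1) th1 t) i1) ->
  ~ (coverage (@aa R) m eta (yy R eta th1) (bb R eta th1) th1 i1 @ \oo --> aa R i1)%classic.
Proof.
move=> Hm.
have E : coverage (@aa R) m eta (yy R eta th1) (bb R eta th1) th1 i1 = fun _ => 1.
  apply/funext => N; rewrite /coverage (eq_bigr (fun _ => 1)); last by move=> t _; rewrite Hm.
  by rewrite sumr_const card_ord mulVf // pnatr_eq0.
rewrite E => H.
have h' := cvg_unique (@Rhausdorff R) H (cvg_cst (1:R)).
have h2 := h' (fmap_proper_filter _ eventually_filter) eventually_filter.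
by move: h2; rewrite /aa /=; lra.
Qed.

Lemma levels_aa (R : realType) : levels (aa R).
Proof.
split.
  by move=> i; case: (I2_cases i) => ->; rewrite /aa /=; apply/andP; split; lra.
move=> i j; case: (I2_cases i) => ->; case: (I2_cases j) => -> //= _.
rewrite /aa /=; lra.
Qed.

Lemma fails_gen (R : realType) (eta : R) (th1 : 'I_2 -> R) (he : 0 < eta) m :
  (forall t, yy R eta th1 t <= m (qt_q (@aa R) eta (yy R eta th1) (bb R eta th1) th1 t) i1) ->
  fails_for (aa R) m eta th1.
Proof.
move=> Hm; exists (yy R eta th1), (bb R eta th1); split.
  move=> t; apply: inK2; rewrite /bb /bpol; case: ifP => _ /=; lra.
split; last by exists i1; exact: cov_fail.
have [M hM] : exists M : R, - M <= th1 i0 + th1 i1 <= M.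
  by exists `|th1 i0 + th1 i1|; rewrite -ler_norml.
have hC := Cb_ge R eta th1.
exists (M + Cb R eta th1 + 3); split.
  by move: hM => /andP [h1 h2]; lra.
move=> t i.
have hS := stS R eta th1 t.
have hD := stD R eta th1 he t.
rewrite ltr_norml /yy /bb /ypol /bpol.
move: hM hD hS hC; move: (th1 i0 + th1 i1) (Cb R eta th1) (st R eta th1 t i0) (st R eta th1 t i1) => S C u w.
move=> /andP [hM1 hM2] /andP [hD1 hD2] hS hC.
case: (I2_cases i) => ->; case: ifP => h //=; apply/andP; split; lra.
Qed.

Theorem proposition2 (R : realType) :
  (forall eta : R, 0 < eta ->
     exists (n : nat) (a : 'I_n -> R), levels a /\
       forall th1 : 'I_n -> R, fails_for a (@sortv R n) eta th1) /\
  (forall eta : R, 0 < eta ->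
     exists (n : nat) (a : 'I_n -> R), levels a /\
       forall m : ('I_n -> R) -> ('I_n -> R),
         (forall v, is_isoproj v (m v)) ->
         forall th1 : 'I_n -> R, fails_for a m eta th1).
Proof.
split=> eta he; exists 2%N, (aa R); (split; first exact: levels_aa).
  move=> th1; apply: fails_gen => // t.
  rewrite /qt_q thetaE /yy /ypol.
  set v := fun i => bb R eta th1 t i + st R eta th1 t i.
  case: ifP => h.
    have := sortv_max R v i0; rewrite {1}/v /bb /bpol h; lra.
  have := sortv_max R v i1; rewrite {1}/v /bb /bpol h /=; lra.
move=> m Hm th1; apply: fails_gen => // t.
rewrite /qt_q thetaE /yy /ypol.
set v := fun i => bb R eta th1 t i + st R eta th1 t i.
case: ifP => h.
  have hv : v i1 < v i0 by rewrite /v /bb /bpol h !add0r.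
  have := proj_b R v (m v) (Hm v) hv; rewrite /v /bb /bpol h !add0r; lra.
have hv : v i0 <= v i1.
  rewrite /v /bb /bpol h /= add0r; move/negbT: h; rewrite -leNgt; lra.
have := proj_a R v (m v) (Hm v) hv; rewrite /v /bb /bpol h /=; lra.
Qed.
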